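(* Let $(W,S)$ be a Coxeter system with $S$ finite such that all elements of $Q_W$ are conjugate in $W$ (i.e. $c(W)=1$). Then the central extension $0\to\mathbb{Z}\to\operatorname{Ad}(Q_W)\xrightarrow{\phi}W\to1$ (where $\mathbb{Z}$ is identified with $\ker\phi$ via $1\mapsto e_s^2$, $s\in S$) is the unique nontrivial central extension of $W$ by $\mathbb{Z}$, up to equivalence of extensions.
   Context: A Coxeter system $(W,S)$: $S$ finite, $m:S\times S\to\mathbb{N}\cup\{\infty\}$ with $m(s,s)=1$, $2\le m(s,t)=m(t,s)\le\infty$ for $s\ne t$, $W=\langle s\in S\mid (st)^{m(s,t)}=1\ (m(s,t)<\infty)\rangle$. The Coxeter quandle $Q_W=\bigcup_{w\in W}w^{-1}Sw$ has operation $x\ast y=yxy$; $\operatorname{Ad}(Q_W)=\langle e_x\ (x\in Q_W)\mid e_y^{-1}e_xe_y=e_{x\ast y}\rangle$; $\phi:\operatorname{Ad}(Q_W)\to W$ is $e_x\mapsto x$. When $c(W)=1$, $\ker\phi$ is central and infinite cyclic, generated by $e_s^2$, which is independent of $s\in S$. *)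

(* Defs.v *)
(* abstract (possibly infinite) groups as records with
   Leibniz equality; groups given by presentations are characterized by
   their universal property. *)
From Stdlib Require Import ZArith List Lia.

Record group := Group {
  carrier :> Type;
  mul : carrier -> carrier -> carrier;
  one : carrier;
  inv : carrier -> carrier;
  mulA : forall x y z, mul x (mul y z) = mul (mul x y) z;
  mul1g : forall x, mul one x = x;
  mulg1 : forall x, mul x one = x;
  mulVg : forall x, mul (inv x) x = one;
  mulgV : forall x, mul x (inv x) = one }.

Arguments mul {g} _ _.
Arguments one {g}.
Arguments inv {g} _.

Definition is_hom (G H : group) (f : G -> H) : Prop :=
  forall x y, f (mul x y) = mul (f x) (f y).
Arguments is_hom {G H} f.

Definition pow_nat {G : group} (x : G) (n : nat) : G :=
  Nat.iter n (fun y => mul x y) one.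

Definition zpow {G : group} (x : G) (n : Z) : G :=
  match n with
  | Z0 => one
  | Zpos p => pow_nat x (Pos.to_nat p)
  | Zneg p => inv (pow_nat x (Pos.to_nat p))
  end.

Definition Zgroup : group.
Proof.
  refine (@Group Z Z.add 0%Z Z.opp _ _ _ _ _); intros; lia.
Defined.

Definition prod_group (G H : group) : group.
Proof.
  refine (@Group (G * H)%type
            (fun a b => (mul (fst a) (fst b), mul (snd a) (snd b)))
            (one, one)
            (fun a => (inv (fst a), inv (snd a))) _ _ _ _ _).
  - intros [] [] []; simpl; now rewrite !mulA.
  - intros []; simpl; now rewrite !mul1g.
  - intros []; simpl; now rewrite !mulg1.
  - intros []; simpl; now rewrite !mulVg.
  - intros []; simpl; now rewrite !mulgV.
Defined.

(* m s t = None encodes m(s,t) = infinity *)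
Definition coxeter_matrix {S : Type} (m : S -> S -> option nat) : Prop :=
  (forall s, m s s = Some 1) /\
  (forall s t, m s t = m t s) /\
  (forall s t k, s <> t -> m s t = Some k -> 2 <= k).

Definition cox_rel {S : Type} (m : S -> S -> option nat) (H : group)
  (f : S -> H) : Prop :=
  forall s t k, m s t = Some k -> pow_nat (mul (f s) (f t)) k = one.

(** (W, sigma) is the group presented by <S | (st)^m(s,t) = 1>. *)
Definition is_coxeter_group {S : Type} (m : S -> S -> option nat)
  (W : group) (sigma : S -> W) : Prop :=
  cox_rel m W sigma /\
  forall (H : group) (f : S -> H), cox_rel m H f ->
    exists g : W -> H, is_hom g /\ (forall s, g (sigma s) = f s) /\
      (forall g' : W -> H, is_hom g' -> (forall s, g' (sigma s) = f s) ->
         forall x, g' x = g x).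

Definition in_QW {S : Type} {W : group} (sigma : S -> W) (x : W) : Prop :=
  exists (w : W) (s : S), x = mul (inv w) (mul (sigma s) w).

Definition qop {W : group} (x y : W) : W := mul y (mul x y).

Definition adj_rel {W : group} (Q : W -> Prop) (H : group) (f : W -> H)
  : Prop :=
  forall x y, Q x -> Q y -> mul (inv (f y)) (mul (f x) (f y)) = f (qop x y).

(** (A, e) is the adjoint group Ad(Q) = < e_x (x in Q) | e_y^-1 e_x e_y =
    e_{x*y} >; only the values of e on Q are meaningful. *)
Definition is_adjoint_group {W : group} (Q : W -> Prop) (A : group)
  (e : W -> A) : Prop :=
  adj_rel Q A e /\
  forall (H : group) (f : W -> H), adj_rel Q H f ->
    exists g : A -> H, is_hom g /\ (forall x, Q x -> g (e x) = f x) /\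
      (forall g' : A -> H, is_hom g' -> (forall x, Q x -> g' (e x) = f x) ->
         forall a, g' a = g a).

Definition is_central_ext {W E : group} (i : Zgroup -> E) (p : E -> W)
  : Prop :=
  is_hom i /\ is_hom p /\
  (forall n n', i n = i n' -> n = n') /\
  (forall w, exists x, p x = w) /\
  (forall x, p x = one <-> exists n, x = i n) /\
  (forall n x, mul (i n) x = mul x (i n)).

Definition ext_equiv {W E E' : group} (i : Zgroup -> E) (p : E -> W)
  (i' : Zgroup -> E') (p' : E' -> W) : Prop :=
  exists theta : E -> E', is_hom theta /\
    (forall n, theta (i n) = i' n) /\ (forall x, p' (theta x) = p x).

Definition triv_i (W : group) : Zgroup -> prod_group Zgroup W :=
  fun n => (n, one).
Definition triv_p (W : group) : prod_group Zgroup W -> W := fun a => snd a.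

Definition trivial_ext {W E : group} (i : Zgroup -> E) (p : E -> W) : Prop :=
  ext_equiv (triv_i W) (triv_p W) i p.

(* Main.v *)
Require Import Defs.
From Stdlib Require Import ZArith List Lia.
From Stdlib Require Import ProofIrrelevance ClassicalEpsilon.

Section GL.
Variable G : group.
Implicit Types x y z : G.

Lemma mulKl x y z : mul x y = mul x z -> y = z.
Proof. intros H. rewrite <- (mul1g _ y), <- (mul1g _ z), <- (mulVg _ x), <- !mulA, H. reflexivity. Qed.
Lemma mulKr x y z : mul y x = mul z x -> y = z.
Proof. intros H. rewrite <- (mulg1 _ y), <- (mulg1 _ z), <- (mulgV _ x), !mulA, H. reflexivity. Qed.
Lemma inv_uniq x y : mul x y = one -> y = inv x.
Proof. intros H. apply (mulKl x). now rewrite H, mulgV. Qed.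
Lemma inv_uniq' x y : mul x y = one -> x = inv y.
Proof. intros H. apply (mulKr y). now rewrite H, mulVg. Qed.
Lemma invK x : inv (inv x) = x.
Proof. symmetry. apply (inv_uniq (inv x)). apply mulVg. Qed.
Lemma inv_mul x y : inv (mul x y) = mul (inv y) (inv x).
Proof. symmetry. apply inv_uniq. rewrite <- mulA, (mulA _ y), mulgV, mul1g, mulgV. reflexivity. Qed.
Lemma inv_one : inv (@one G) = one.
Proof. symmetry. apply inv_uniq. apply mul1g. Qed.
Lemma pow_succ_r x n : pow_nat x (S n) = mul (pow_nat x n) x.
Proof. induction n; simpl in *. rewrite mulg1, mul1g; auto.
  rewrite IHn at 1. now rewrite mulA. Qed.
Lemma pow_add x a b : pow_nat x (a + b) = mul (pow_nat x a) (pow_nat x b).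
Proof. induction a; simpl. now rewrite mul1g. rewrite IHa. now rewrite mulA. Qed.
Lemma zpow_of_nat x k : zpow x (Z.of_nat k) = pow_nat x k.
Proof. destruct k. reflexivity. simpl. now rewrite SuccNat2Pos.id_succ. Qed.
Lemma zpow_neg_of_nat x k : zpow x (- Z.of_nat k)%Z = inv (pow_nat x k).
Proof. destruct k. simpl. now rewrite inv_one. simpl. now rewrite SuccNat2Pos.id_succ. Qed.
Lemma Z_cases (n : Z) : exists k, n = Z.of_nat k \/ n = (- Z.of_nat k)%Z.
Proof. destruct (Z_le_gt_dec 0 n). exists (Z.to_nat n); left; lia. exists (Z.to_nat (-n)); right; lia. Qed.
Lemma zpow_succ x n : zpow x (n + 1) = mul (zpow x n) x.
Proof. destruct (Z_cases n) as [k [-> | ->]].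
  - replace (Z.of_nat k + 1)%Z with (Z.of_nat (S k)) by lia.
    rewrite !zpow_of_nat. apply pow_succ_r.
  - destruct k. simpl. now rewrite mul1g, mulg1.
    replace (- Z.of_nat (S k) + 1)%Z with (- Z.of_nat k)%Z by lia.
    rewrite !zpow_neg_of_nat. simpl. rewrite inv_mul, <- mulA, mulVg, mulg1. reflexivity.
Qed.
Lemma zpow_pred x n : zpow x (n - 1) = mul (zpow x n) (inv x).
Proof. apply (mulKr x). rewrite <- mulA, mulVg, mulg1, <- zpow_succ. f_equal; lia. Qed.
Lemma zpow_add x a b : zpow x (a + b) = mul (zpow x a) (zpow x b).
Proof. induction b using Z.peano_ind.
  - simpl. rewrite Z.add_0_r, mulg1. reflexivity.
  - rewrite <- Z.add_1_r, Z.add_assoc, !zpow_succ, IHb, mulA. reflexivity.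
  - rewrite <- Z.sub_1_r. replace (a + (b - 1))%Z with (a + b - 1)%Z by lia.
    rewrite !zpow_pred, IHb, mulA. reflexivity.
Qed.
Lemma zpow_opp x n : zpow x (- n)%Z = inv (zpow x n).
Proof. apply inv_uniq. rewrite <- zpow_add. now rewrite Z.add_opp_diag_r. Qed.
Lemma zpow_one_base n : zpow (@one G) n = one.
Proof. destruct (Z_cases n) as [k [-> | ->]]; [rewrite zpow_of_nat| rewrite zpow_neg_of_nat];
  (induction k; simpl; [try rewrite inv_one; auto | rewrite mul1g; auto]). Qed.
Lemma comm_inv x y : mul x y = mul y x -> mul (inv x) y = mul y (inv x).
Proof. intros H. apply (mulKl x). rewrite mulA, mulgV, mul1g, !mulA, H, <- mulA, mulgV, mulg1. reflexivity. Qed.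
Lemma comm_zpow x y n : mul x y = mul y x -> mul (zpow x n) y = mul y (zpow x n).
Proof. intros H. assert (forall k, mul (pow_nat x k) y = mul y (pow_nat x k)).
  { induction k; simpl. now rewrite mul1g, mulg1. rewrite <- mulA, IHk, !mulA, H. reflexivity. }
  destruct (Z_cases n) as [k [-> | ->]]; [rewrite zpow_of_nat| rewrite zpow_neg_of_nat]; auto.
  apply comm_inv; auto. Qed.
End GL.

Section Hom.
Variables G H : group.
Variable f : G -> H.
Hypothesis Hf : is_hom f.
Lemma hom_one : f one = one.
Proof. apply (mulKl _ (f one)). rewrite <- Hf, !mulg1. reflexivity. Qed.
Lemma hom_inv x : f (inv x) = inv (f x).
Proof. apply inv_uniq. rewrite <- Hf, mulgV. apply hom_one. Qed.
Lemma hom_pow x k : f (pow_nat x k) = pow_nat (f x) k.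
Proof. induction k; simpl. apply hom_one. now rewrite Hf, IHk. Qed.
Lemma hom_zpow x n : f (zpow x n) = zpow (f x) n.
Proof. destruct (Z_cases n) as [k [-> | ->]]; [rewrite !zpow_of_nat| rewrite !zpow_neg_of_nat, hom_inv]; now rewrite hom_pow. Qed.
End Hom.

Lemma Zpow_nat (c : Zgroup) k : pow_nat c k = (c * Z.of_nat k)%Z.
Proof. induction k; simpl pow_nat. cbn. lia. rewrite IHk. cbn -[Z.mul Z.of_nat]. lia. Qed.
Lemma Zzpow (c : Zgroup) n : zpow c n = (c * n)%Z.
Proof. destruct (Z_cases n) as [k [-> | ->]]; [rewrite !zpow_of_nat| rewrite !zpow_neg_of_nat]; rewrite Zpow_nat; cbn -[Z.mul Z.of_nat]; lia. Qed.

Definition conj {G : group} (a b : G) : G := mul (inv b) (mul a b).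

Section Conj.
Variable G : group.
Implicit Types a b c : G.
Lemma conj_mul a b c : conj a (mul b c) = conj (conj a b) c.
Proof. unfold conj. rewrite inv_mul, !mulA. reflexivity. Qed.
Lemma conj_inj a a' b : conj a b = conj a' b -> a = a'.
Proof. unfold conj. intros H. apply mulKl in H. now apply mulKr in H. Qed.
Lemma conj_central a b : (forall x, mul a x = mul x a) -> conj a b = a.
Proof. intros H. unfold conj. rewrite H, mulA, mulVg, mul1g. reflexivity. Qed.
Lemma conj_sq a b : mul (conj a b) (conj a b) = conj (mul a a) b.
Proof. unfold conj. rewrite !mulA. f_equal. rewrite <- !mulA. f_equal. f_equal.
  rewrite !mulA, mulgV, mul1g. reflexivity. Qed.
Lemma conj_one a : conj a one = a.
Proof. unfold conj. now rewrite inv_one, mul1g, mulg1. Qed.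
Lemma conj_eq a b c : conj a b = c -> mul a b = mul b c.
Proof. unfold conj. intros <-. rewrite mulA, mulgV, mul1g. reflexivity. Qed.
Lemma pow_swap a b j : mul a (pow_nat (mul b a) j) = mul (pow_nat (mul a b) j) a.
Proof. induction j; simpl. now rewrite mul1g, mulg1.
  transitivity (mul (mul a b) (mul a (pow_nat (mul b a) j))).
  rewrite !mulA; reflexivity. rewrite IHj, mulA. reflexivity. Qed.
Lemma pow_comm_self a j : mul (pow_nat a j) a = mul a (pow_nat a j).
Proof. rewrite <- pow_succ_r. reflexivity. Qed.
End Conj.

Lemma hom_conj (G H : group) (f : G -> H) (Hf : is_hom f) a b : f (conj a b) = conj (f a) (f b).
Proof. unfold conj. now rewrite !Hf, hom_inv. Qed.

Definition subgrp (G : group) (P : G -> Prop) (P1 : P one)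
  (PM : forall x y, P x -> P y -> P (mul x y)) (PI : forall x, P x -> P (inv x)) : group.
Proof.
  refine (@Group {x | P x}
    (fun a b => exist _ (mul (proj1_sig a) (proj1_sig b)) (PM _ _ (proj2_sig a) (proj2_sig b)))
    (exist _ one P1) (fun a => exist _ (inv (proj1_sig a)) (PI _ (proj2_sig a))) _ _ _ _ _);
  intros; repeat match goal with a : {x | P x} |- _ => destruct a end; apply ProofIrrelevance.ProofIrrelevanceTheory.subset_eq_compat; simpl.
  apply mulA. apply mul1g. apply mulg1. apply mulVg. apply mulgV.
Defined.

Section Main.
Variables (S : Type) (m : S -> S -> option nat) (Hm : coxeter_matrix m)
  (W : group) (sigma : S -> W) (HW : is_coxeter_group m W sigma)
  (Hc : forall x y, in_QW sigma x -> in_QW sigma y ->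
          exists w : W, y = mul (inv w) (mul x w))
  (A : group) (e : W -> A) (HA : is_adjoint_group (in_QW sigma) A e)
  (phi : A -> W) (Hphi : is_hom phi)
  (Hphie : forall x, in_QW sigma x -> phi (e x) = x) (s : S).

Notation Q := (in_QW sigma).

Lemma sig_inv t : mul (sigma t) (sigma t) = one.
Proof. destruct HW as [Hr _]. destruct Hm as [H1 _]. specialize (Hr t t 1 (H1 t)).
  simpl in Hr. now rewrite mulg1 in Hr. Qed.
Lemma sig_inv' t : inv (sigma t) = sigma t.
Proof. symmetry. apply inv_uniq. apply sig_inv. Qed.
Lemma Q_inv x : Q x -> mul x x = one.
Proof. intros [w [t ->]]. rewrite !mulA, <- (mulA _ _ w (inv w)), mulgV, mulg1.
  rewrite <- (mulA _ (inv w)), sig_inv, mulg1, mulVg. reflexivity. Qed.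
Lemma Q_inv' x : Q x -> inv x = x.
Proof. intros H. symmetry. apply inv_uniq. now apply Q_inv. Qed.
Lemma Q_conj x w : Q x -> Q (conj x w).
Proof. intros [v [t ->]]. exists (mul v w), t. rewrite inv_mul. unfold conj. rewrite !mulA. reflexivity. Qed.
Lemma qop_conj x y : Q y -> qop x y = conj x y.
Proof. intros H. unfold qop, conj. now rewrite Q_inv'. Qed.
Lemma Q_qop x y : Q x -> Q y -> Q (qop x y).
Proof. intros. rewrite qop_conj by auto. now apply Q_conj. Qed.
Lemma Q_sig t : Q (sigma t).
Proof. exists one, t. now rewrite inv_one, mul1g, mulg1. Qed.

Definition prodL (L : list S) : W := fold_right (fun t acc => mul (sigma t) acc) one L.
Lemma prodL_app L1 L2 : prodL (L1 ++ L2) = mul (prodL L1) (prodL L2).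
Proof. induction L1; simpl. now rewrite mul1g. rewrite IHL1. apply mulA. Qed.
Lemma prodL_rev L : inv (prodL L) = prodL (rev L).
Proof. induction L; simpl. apply inv_one. rewrite inv_mul, IHL, prodL_app, sig_inv'. simpl.
  now rewrite mulg1. Qed.

Lemma W_uniq (H : group) (g1 g2 : W -> H) : is_hom g1 -> is_hom g2 ->
  (forall t, g1 (sigma t) = g2 (sigma t)) -> forall w, g1 w = g2 w.
Proof. intros h1 h2 Ht w. destruct HW as [Hr Hu].
  destruct (Hu H (fun t => g1 (sigma t))) as [g [_ [_ Hg]]].
  { intros a b k Hk. rewrite <- h1, <- hom_pow by auto. rewrite (Hr a b k Hk). apply hom_one; auto. }
  rewrite (Hg g1 h1), (Hg g2 h2); auto. Qed.

Lemma gen w : exists L, w = prodL L.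
Proof.
  set (P := fun w : W => exists L, w = prodL L).
  assert (P1 : P one) by (exists nil; reflexivity).
  assert (PM : forall x y, P x -> P y -> P (mul x y)).
  { intros x y [L1 ->] [L2 ->]. exists (L1 ++ L2). now rewrite prodL_app. }
  assert (PI : forall x, P x -> P (inv x)).
  { intros x [L ->]. exists (rev L). apply prodL_rev. }
  set (K := subgrp W P P1 PM PI).
  assert (Pt : forall t, P (sigma t)) by (intros t; exists (t :: nil); simpl; now rewrite mulg1).
  destruct HW as [Hr Hu].
  destruct (Hu K (fun t => exist _ (sigma t) (Pt t))) as [g [hg [gt _]]].
  { intros a b k Hk. 
    assert (E : forall (u : K) j, proj1_sig (pow_nat u j) = pow_nat (proj1_sig u) j).
    { intros u j; induction j; simpl; auto. now rewrite IHj. }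
    match goal with |- ?X = _ => assert (Hv : proj1_sig X = one) by (rewrite E; simpl; apply Hr; auto);
      destruct X as [v pv] end.
    simpl in Hv. subst v. apply ProofIrrelevanceTheory.subset_eq_compat. reflexivity. }
  assert (Hid : forall w, proj1_sig (g w) = w).
  { apply (W_uniq W (fun w => proj1_sig (g w)) (fun w => w)).
    - intros x y. now rewrite hg.
    - intros x y; reflexivity.
    - intros t. now rewrite gt. }
  rewrite <- (Hid w). apply (proj2_sig (g w)).
Qed.

Lemma A_uniq (H : group) (g1 g2 : A -> H) : is_hom g1 -> is_hom g2 ->
  (forall x, Q x -> g1 (e x) = g2 (e x)) -> forall a, g1 a = g2 a.
Proof. intros h1 h2 Ht a. destruct HA as [Hr Hu].
  destruct (Hu H (fun x => g1 (e x))) as [g [_ [_ Hg]]].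
  { intros x y Qx Qy. rewrite <- (hom_inv _ _ g1 h1), <- !h1. rewrite Hr; auto. }
  rewrite (Hg g1 h1), (Hg g2 h2); auto. intros; symmetry; auto. Qed.

Lemma central_of c : (forall x, Q x -> mul c (e x) = mul (e x) c) -> forall a, mul c a = mul a c.
Proof. intros H a.
  assert (E : forall a, conj a c = a).
  { apply (A_uniq A (fun a => conj a c) (fun a => a)).
    - intros x y. unfold conj. rewrite !mulA, <- (mulA _ _ c (inv c)), mulgV, mulg1. reflexivity.
    - intros x y; reflexivity.
    - intros x Qx. unfold conj. rewrite <- H by auto. rewrite mulA, mulVg, mul1g. reflexivity. }
  specialize (E a). apply conj_eq in E. auto. Qed.

Lemma e_rel x y : Q x -> Q y -> conj (e x) (e y) = e (qop x y).
Proof. intros. apply (proj1 HA); auto. Qed.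

Lemma ex2_central x : Q x -> forall a, mul (mul (e x) (e x)) a = mul a (mul (e x) (e x)).
Proof. intros Qx. apply central_of. intros y Qy.
  assert (E1 := e_rel y x Qy Qx).
  assert (E2 := e_rel (qop y x) x (Q_qop _ _ Qy Qx) Qx).
  assert (qop (qop y x) x = y).
  { unfold qop. rewrite !mulA, Q_inv by auto. rewrite mul1g, <- !mulA, Q_inv, mulg1 by auto. reflexivity. }
  rewrite H in E2. apply conj_eq in E1. apply conj_eq in E2.
  rewrite <- mulA, <- E2, mulA, <- E1, mulA. reflexivity. Qed.

Definition z := mul (e (sigma s)) (e (sigma s)).

Lemma ex2_eq x : Q x -> mul (e x) (e x) = z.
Proof. intros Qx. destruct (Hc (sigma s) x (Q_sig s) Qx) as [w ->].
  destruct (gen w) as [L ->]. unfold z. generalize (sigma s) (Q_sig s). clear Qx.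
  induction L as [|u L IH]; intros y Qy.
  - simpl. now rewrite inv_one, mul1g, mulg1.
  - change (mul (inv (prodL (u :: L))) (mul y (prodL (u :: L)))) with (conj y (mul (sigma u) (prodL L))).
    rewrite conj_mul. unfold conj at 1. rewrite IH.
    + fold (conj y (sigma u)). rewrite <- qop_conj by apply Q_sig.
      rewrite <- e_rel, conj_sq by (auto using Q_sig). apply conj_central. apply ex2_central; auto.
    + apply Q_conj; auto.
Qed.

Lemma z_central a : mul z a = mul a z.
Proof. unfold z. apply ex2_central, Q_sig. Qed.


Fixpoint WW (t u : S) (j : nat) : W * W :=
  match j with
  | O => (sigma t, sigma u)
  | Datatypes.S j => let pq := WW t u j in
     (mul (sigma t) (mul (snd pq) (sigma t)), mul (sigma u) (mul (fst pq) (sigma u)))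
  end.

Lemma WW_Q t u j : Q (fst (WW t u j)) /\ Q (snd (WW t u j)).
Proof. induction j as [|j [H1 H2]]; simpl. split; apply Q_sig.
  split; apply Q_qop; auto using Q_sig. Qed.

Lemma alg_step (G : group) (a b : G) j :
  mul a (mul (mul (pow_nat (mul b a) j) b) a) = mul (pow_nat (mul a b) (Nat.succ j)) a.
Proof. rewrite !mulA, (pow_swap _ a b j). rewrite pow_succ_r. rewrite <- !mulA. reflexivity. Qed.

Lemma WW_form t u j : fst (WW t u j) = mul (pow_nat (mul (sigma t) (sigma u)) j) (sigma t) /\
  snd (WW t u j) = mul (pow_nat (mul (sigma u) (sigma t)) j) (sigma u).
Proof. induction j as [|j [H1 H2]]; simpl. split; now rewrite mul1g.
  rewrite H1, H2. split; apply alg_step. Qed.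

Lemma dihedral (K : group) (pi : A -> K) (hpi : is_hom pi) (pz : pi z = one) :
  cox_rel m K (fun t => pi (e (sigma t))).
Proof.
  intros t u k Hk.
  assert (sq : forall x, Q x -> mul (pi (e x)) (pi (e x)) = one).
  { intros x Qx. rewrite <- hpi, ex2_eq; auto. }
  assert (sqi : forall x, Q x -> inv (pi (e x)) = pi (e x)).
  { intros x Qx. symmetry. apply inv_uniq. auto. }
  assert (rel : forall x y, Q x -> Q y -> conj (pi (e x)) (pi (e y)) = pi (e (qop x y))).
  { intros x y Qx Qy. rewrite <- hom_conj, e_rel; auto. }
  set (a := pi (e (sigma t))). set (b := pi (e (sigma u))).
  assert (KF : forall j, pi (e (fst (WW t u j))) = mul (pow_nat (mul a b) j) a /\
                        pi (e (snd (WW t u j))) = mul (pow_nat (mul b a) j) b).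
  { induction j as [|j [H1 H2]]; simpl. split; now rewrite mul1g.
    destruct (WW_Q t u j) as [Q1 Q2].
    change (mul (sigma t) (mul (snd (WW t u j)) (sigma t))) with (qop (snd (WW t u j)) (sigma t)).
    change (mul (sigma u) (mul (fst (WW t u j)) (sigma u))) with (qop (fst (WW t u j)) (sigma u)).
    rewrite <- !rel by (auto using Q_sig). rewrite H1, H2. unfold conj.
    assert (ai : inv a = a) by (apply sqi, Q_sig). assert (bi : inv b = b) by (apply sqi, Q_sig).
    change (pi (e (sigma t))) with a; change (pi (e (sigma u))) with b.
    rewrite ai, bi. split; apply alg_step. }
  destruct k as [|k]. reflexivity.
  rewrite pow_succ_r, mulA, <- (proj1 (KF k)), (proj1 (WW_form t u k)).
  assert (Hc1 := proj1 HW t u (Nat.succ k) Hk). simpl in Hc1. apply inv_uniq in Hc1.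
  rewrite Hc1, inv_mul, !sig_inv', <- mulA, sig_inv, mulg1. apply sq, Q_sig.
Qed.


Lemma psi_conj (K : group) (pi : A -> K) (hpi : is_hom pi) (psi : W -> K) (hpsi : is_hom psi)
  (Ht : forall t, psi (sigma t) = pi (e (sigma t))) : forall x, Q x -> psi x = pi (e x).
Proof.
  assert (Gen : forall L y, Q y -> pi (e (conj y (prodL L))) = conj (pi (e y)) (psi (prodL L))).
  { induction L as [|u L IH]; intros y Qy; simpl.
    - rewrite !conj_one, hom_one by auto. rewrite conj_one. reflexivity.
    - rewrite conj_mul, hpsi, conj_mul.
      rewrite <- (qop_conj y (sigma u)) by apply Q_sig.
      rewrite IH by (apply Q_qop; auto using Q_sig). f_equal.
      rewrite <- e_rel, hom_conj, Ht by (auto using Q_sig). reflexivity. }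
  intros x [w [t ->]]. destruct (gen w) as [L ->].
  fold (conj (sigma t) (prodL L)). rewrite Gen by apply Q_sig.
  rewrite hom_conj, Ht by auto. reflexivity.
Qed.

Variable deg : A -> Zgroup.
Hypothesis deg_hom : is_hom deg.
Hypothesis deg_e : forall x, Q x -> deg (e x) = 1%Z.

Lemma deg_z : deg z = 2%Z.
Proof. unfold z. rewrite deg_hom, deg_e by apply Q_sig. reflexivity. Qed.
Lemma deg_zpow n : deg (zpow z n) = (2 * n)%Z.
Proof. rewrite hom_zpow, deg_z, Zzpow by auto. reflexivity. Qed.
Lemma deg_mul a b : deg (mul a b) = (deg a + deg b)%Z.
Proof. rewrite deg_hom. reflexivity. Qed.

Definition proj (a : A) : A := mul a (zpow z (- (deg a / 2))).

Lemma zpow_z_central n a : mul (zpow z n) a = mul a (zpow z n).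
Proof. apply comm_zpow. apply z_central. Qed.

Lemma proj_z a n : proj (mul a (zpow z n)) = proj a.
Proof. unfold proj. rewrite deg_mul, deg_zpow.
  replace ((deg a + 2 * n) / 2)%Z with (deg a / 2 + n)%Z.
  2:{ rewrite Z.mul_comm, Z.div_add by lia. reflexivity. }
  rewrite <- mulA, <- zpow_add. f_equal. f_equal. lia. Qed.
Lemma proj_idem a : proj (proj a) = proj a.
Proof. unfold proj at 2. apply proj_z. Qed.
Lemma proj_mul_l a b : proj (mul (proj a) b) = proj (mul a b).
Proof. unfold proj at 2. rewrite <- mulA, zpow_z_central, mulA. apply proj_z. Qed.
Lemma proj_mul_r a b : proj (mul a (proj b)) = proj (mul a b).
Proof. unfold proj at 2. rewrite mulA. apply proj_z. Qed.
Lemma proj_one : proj one = one.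
Proof. unfold proj. rewrite hom_one by auto. simpl. now rewrite mulg1. Qed.
Lemma proj_ker a : proj a = one -> exists n, a = zpow z n.
Proof. unfold proj. intros H. apply inv_uniq' in H. rewrite <- zpow_opp in H.
  eexists; exact H. Qed.

Definition Hgrp : group.
Proof.
  refine (@Group {a : A | proj a = a}
    (fun a b => exist _ (proj (mul (proj1_sig a) (proj1_sig b))) (proj_idem _))
    (exist _ one proj_one)
    (fun a => exist _ (proj (inv (proj1_sig a))) (proj_idem _)) _ _ _ _ _);
  intros; repeat match goal with a : {x | proj x = x} |- _ => destruct a end;
  apply ProofIrrelevance.ProofIrrelevanceTheory.subset_eq_compat; simpl.
  - rewrite proj_mul_r, proj_mul_l, mulA. reflexivity.
  - rewrite mul1g. assumption.
  - rewrite mulg1. assumption.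
  - rewrite proj_mul_l, mulVg. apply proj_one.
  - rewrite proj_mul_r, mulgV. apply proj_one.
Defined.

Definition piH (a : A) : Hgrp := exist _ (proj a) (proj_idem a).

Lemma piH_hom : is_hom piH.
Proof. intros a b. apply ProofIrrelevance.ProofIrrelevanceTheory.subset_eq_compat. simpl.
  rewrite proj_mul_l, proj_mul_r. reflexivity. Qed.

Lemma piH_z : piH z = one.
Proof. apply ProofIrrelevance.ProofIrrelevanceTheory.subset_eq_compat.
  rewrite <- proj_one. rewrite <- (proj_z one 1). f_equal. simpl. rewrite mul1g, mulg1. reflexivity. Qed.

Lemma ker_phi a : phi a = one -> exists n, a = zpow z n.
Proof. intros Ha. apply proj_ker.
  destruct (proj2 HW Hgrp (fun t => piH (e (sigma t)))) as [psi [hpsi [Ht _]]].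
  { apply dihedral. apply piH_hom. apply piH_z. }
  assert (E : forall a, psi (phi a) = piH a).
  { apply A_uniq. intros x y; rewrite Hphi; apply hpsi. apply piH_hom.
    intros x Qx. rewrite Hphie by auto. apply (psi_conj _ piH piH_hom psi hpsi Ht); auto. }
  specialize (E a). rewrite Ha, hom_one in E by auto. 
  apply (f_equal (@proj1_sig _ _)) in E. simpl in E. auto. Qed.


Lemma phi_z : phi z = one.
Proof. unfold z. rewrite Hphi, Hphie by apply Q_sig. apply sig_inv. Qed.

Lemma partA : is_central_ext (fun n : Zgroup => zpow z n) phi.
Proof.
  split; [|split; [|split; [|split; [|split]]]].
  - intros a b. apply zpow_add.
  - exact Hphi.
  - intros n n' H. apply (f_equal deg) in H. rewrite !deg_zpow in H. lia.
  - intros w. destruct (gen w) as [L ->].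
    exists (fold_right (fun t acc => mul (e (sigma t)) acc) one L).
    induction L as [|t L IH]; simpl. apply hom_one; auto.
    rewrite Hphi, IH, Hphie by apply Q_sig. reflexivity.
  - intros x. split. apply ker_phi. intros [n ->]. rewrite hom_zpow, phi_z by auto.
    apply zpow_one_base.
  - intros n x. apply zpow_z_central.
Qed.

Lemma partB : ~ trivial_ext (fun n : Zgroup => zpow z n) phi.
Proof.
  intros [theta [ht [hi hp]]].
  set (c := theta (0%Z, sigma s) : A).
  assert (Hcc : deg c = 0%Z).
  { assert (E : mul c c = one).
    { unfold c. rewrite <- ht. simpl. rewrite sig_inv. apply (hi 0%Z). }
    apply (f_equal deg) in E. rewrite deg_mul, hom_one in E by auto. simpl in E. lia. }
  assert (Hk : phi (mul (e (sigma s)) (inv c)) = one).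
  { rewrite Hphi, hom_inv, Hphie by (auto using Q_sig). unfold c. rewrite hp. simpl. apply mulgV. }
  destruct (ker_phi _ Hk) as [n Hn]. apply (f_equal deg) in Hn.
  rewrite deg_mul, hom_inv, deg_e, deg_zpow, Hcc in Hn by (auto using Q_sig).
  assert (H2 : (1 + - 0 = 2 * n)%Z) by exact Hn. lia.
Qed.

Lemma partC (E : group) (i : Zgroup -> E) (p : E -> W) :
  is_central_ext i p -> trivial_ext i p \/ ext_equiv (fun n : Zgroup => zpow z n) phi i p.
Proof.
  intros (ih & ph & iinj & psurj & pker & icent).
  assert (ipk : forall n, p (i n) = one) by (intros n; apply pker; exists n; reflexivity).
  assert (i0 : i 0%Z = one) by (apply (hom_one _ _ i ih)).
  assert (kc : forall c, p c = one -> forall x, mul c x = mul x c).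
  { intros c Hc0 x. apply pker in Hc0. destruct Hc0 as [n ->]. apply icent. }
  destruct (psurj (sigma s)) as [eps Heps].
  set (P := fun x y => p y = x /\ exists g, y = conj eps g).
  assert (Puniq : forall x y1 y2, P x y1 -> P x y2 -> y1 = y2).
  { intros x y1 y2 [p1 [g ->]] [p2 [h ->]].
    set (k := mul g (inv h)).
    assert (Eg : g = mul k h) by (unfold k; rewrite <- mulA, mulVg, mulg1; reflexivity).
    rewrite Eg, conj_mul. f_equal.
    assert (pk : p (conj eps k) = p eps).
    { rewrite Heps, hom_conj by auto. apply (conj_inj _ _ _ (p h)).
      rewrite <- conj_mul, <- ph, <- Eg, <- Heps, <- !hom_conj by auto. congruence. }
    set (c := mul (inv eps) (conj eps k)).
    assert (Ec : conj eps k = mul eps c) by (unfold c; rewrite mulA, mulgV, mul1g; reflexivity).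
    assert (pc : p c = one) by (unfold c; rewrite ph, hom_inv, pk, mulVg by auto; reflexivity).
    assert (pe2 : p (mul eps eps) = one) by (rewrite ph, Heps; apply sig_inv).
    assert (Sq : mul (conj eps k) (conj eps k) = mul eps eps).
    { rewrite conj_sq. apply conj_central. apply kc; auto. }
    assert (R : mul (mul eps c) (mul eps c) = mul (mul eps eps) (mul c c)).
    { rewrite <- !mulA. f_equal. rewrite !mulA. f_equal. apply kc; auto. }
    rewrite Ec, R in Sq.
    assert (cc : mul c c = one) by (apply (mulKl _ (mul eps eps)); rewrite Sq, mulg1; reflexivity).
    clear Sq; rename cc into Sq.
    apply pker in pc. destruct pc as [n Hn].
    rewrite Hn, <- ih, <- i0 in Sq. apply iinj in Sq. simpl in Sq.
    assert (n = 0%Z) by lia. subst n. rewrite Ec, Hn, i0, mulg1. reflexivity. }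
  assert (Pex : forall x, in_QW sigma x -> exists y, P x y).
  { intros x Qx. destruct (Hc (sigma s) x (Q_sig s) Qx) as [w ->].
    destruct (psurj w) as [g Hg]. exists (conj eps g). split; eauto.
    rewrite hom_conj, Hg, Heps by auto. reflexivity. }
  set (f := fun x => epsilon (inhabits (@one E)) (P x)).
  assert (Pf : forall x, in_QW sigma x -> P x (f x)).
  { intros x Qx. unfold f. apply epsilon_spec. auto. }
  destruct (proj2 HA E f) as [g0 [hg0 [g0e _]]].
  { intros x y Qx Qy. fold (conj (f x) (f y)). apply (Puniq (qop x y)); [| apply Pf, Q_qop; auto].
    destruct (Pf x Qx) as [px [g Hg]]. destruct (Pf y Qy) as [py _]. split.
    - rewrite hom_conj, px, py, qop_conj by auto. reflexivity.
    - exists (mul g (f y)). rewrite Hg, conj_mul. reflexivity. }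
  assert (pg0 : forall a, p (g0 a) = phi a).
  { apply A_uniq. intros a b; rewrite hg0; apply ph. exact Hphi.
    intros x Qx. rewrite g0e, Hphie by auto. apply (Pf x Qx). }
  destruct (pker (g0 z)) as [[n Hn] _].
  { rewrite pg0. apply phi_z. }
  set (k := (n / 2)%Z). set (r := (n mod 2)%Z).
  assert (Hnkr : n = (2 * k + r)%Z) by (apply Z.div_mod; lia).
  assert (Hr : (0 <= r < 2)%Z) by (apply Z.mod_pos_bound; lia).
  set (g1 := fun a => mul (g0 a) (i ((- k) * deg a)%Z)).
  assert (hg1 : is_hom g1).
  { intros a b. unfold g1. rewrite hg0, deg_mul.
    replace ((- k) * (deg a + deg b))%Z with (Z.add ((- k) * deg a) ((- k) * deg b))%Z by lia.
    rewrite ih. rewrite <- !mulA. f_equal. rewrite !mulA. f_equal. symmetry. apply icent. }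
  assert (pg1 : forall a, p (g1 a) = phi a).
  { intros a. unfold g1. rewrite ph, pg0, ipk, mulg1. reflexivity. }
  assert (g1z : g1 z = i r).
  { unfold g1. rewrite Hn, deg_z, <- ih. f_equal. simpl. lia. }
  destruct (Z.eq_dec r 0) as [r0 | r1].
  - left. rewrite r0, i0 in g1z.
    destruct (proj2 HW E (fun t => g1 (e (sigma t)))) as [sh [hsh [sht _]]].
    { apply dihedral; auto. }
    assert (psh : forall w, p (sh w) = w).
    { apply (W_uniq W (fun w => p (sh w)) (fun w => w)).
      intros a b; rewrite hsh; apply ph. intros a b; reflexivity.
      intros t. rewrite sht, pg1, Hphie by apply Q_sig. reflexivity. }
    exists (fun nw : prod_group Zgroup W => mul (i (fst nw)) (sh (snd nw))). split; [|split].
    + intros [a w] [b w']. simpl. rewrite ih, hsh. rewrite <- !mulA. f_equal.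
      rewrite !mulA. f_equal. apply icent.
    + intros a. simpl. unfold triv_i. simpl. rewrite hom_one, mulg1 by auto. reflexivity.
    + intros [a w]. unfold triv_p. simpl. rewrite ph, ipk, psh, mul1g. reflexivity.
  - right. assert (r = 1%Z) by lia. rewrite H in g1z.
    exists g1. split; [|split]; auto.
    intros a. rewrite hom_zpow, g1z, <- hom_zpow by auto. f_equal. rewrite Zzpow. apply Z.mul_1_l.
Qed.

End Main.

Theorem corollary4p6
  (S : Type) (S_fin : exists l : list S, forall s, List.In s l)
  (m : S -> S -> option nat) (Hm : coxeter_matrix m)
  (W : group) (sigma : S -> W) (HW : is_coxeter_group m W sigma)
  (Hc : forall x y, in_QW sigma x -> in_QW sigma y ->
          exists w : W, y = mul (inv w) (mul x w))
  (A : group) (e : W -> A) (HA : is_adjoint_group (in_QW sigma) A e)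
  (phi : A -> W) (Hphi : is_hom phi)
  (Hphie : forall x, in_QW sigma x -> phi (e x) = x)
  (s : S) :
  let iota : Zgroup -> A := fun n => zpow (mul (e (sigma s)) (e (sigma s))) n in
  is_central_ext iota phi /\
  ~ trivial_ext iota phi /\
  (forall (E : group) (i : Zgroup -> E) (p : E -> W),
     is_central_ext i p -> trivial_ext i p \/ ext_equiv iota phi i p).
Proof.
  intros iota.
  destruct (proj2 HA Zgroup (fun _ => 1%Z)) as [deg [hdeg [dege _]]].
  { intros x y _ _. cbn. lia. }
  split; [|split].
  - exact (partA S m Hm W sigma HW Hc A e HA phi Hphi Hphie s deg hdeg dege).
  - exact (partB S m Hm W sigma HW Hc A e HA phi Hphi Hphie s deg hdeg dege).
  - exact (partC S m Hm W sigma HW Hc A e HA phi Hphi Hphie s deg hdeg dege).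
Qed.
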